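(* For every $\sigma\in\widetilde{S}_{AB}$, $\sigma=\inf^{\widetilde{S}_{AB}}\underline{\sigma}$, where $\underline{\sigma}:=\widetilde{S}^{pure}_{AB}\cap\{\sigma'\in\widetilde{S}_{AB}\;\vert\;\sigma\sqsubseteq_{\widetilde{S}_{AB}}\sigma'\}$, and $\widetilde{S}^{pure}_{AB}=\{\sigma_A\widetilde{\otimes}\sigma_B\;\vert\;\sigma_A\in\mathfrak{S}^{pure}_A,\sigma_B\in\mathfrak{S}^{pure}_B\}=Max(\widetilde{S}_{AB})$ is the set of completely meet-irreducible elements of $\widetilde{S}_{AB}$.
   Context: $(\mathfrak{S}_A,\mathfrak{E}_A,\epsilon^{\mathfrak{S}_A})$, $(\mathfrak{S}_B,\mathfrak{E}_B,\epsilon^{\mathfrak{S}_B})$ are States/Effects Chu spaces valued in $\mathfrak{B}=\{\mathbf{Y},\mathbf{N},\bot\}$ (meet $\wedge$, product $\bullet$: $x\bullet\mathbf{Y}=x$, $x\bullet\mathbf{N}=\mathbf{N}$, $\bot\bullet\bot=\bot$), whose spaces of states admit a description in terms of pure states: the set $\mathfrak{S}^{pure}$ of completely meet-irreducible elements equals the set of maximal elements and every state is the infimum of the pure states above it. The minimal tensor product $\widetilde{S}_{AB}$ consists of the maps $\inf^{\widetilde{S}_{AB}}_{i\in I}\sigma_{i,A}\widetilde{\otimes}\sigma_{i,B}:(\mathfrak{l}_A,\mathfrak{l}_B)\mapsto\bigwedge_{i\in I}\epsilon^{\mathfrak{S}_A}_{\mathfrak{l}_A}(\sigma_{i,A})\bullet\epsilon^{\mathfrak{S}_B}_{\mathfrak{l}_B}(\sigma_{i,B})$,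 ordered pointwise. *)

(* Defs.v *)
Inductive Bval : Type := BY | BN | Bbot.

Definition Ble (x y : Bval) : Prop := x = Bbot \/ x = y.

Definition Bneg (x : Bval) : Bval :=
  match x with BY => BN | BN => BY | Bbot => Bbot end.

Definition Bprod (x y : Bval) : Bval :=
  match x, y with
  | _, BY => x
  | _, BN => BN
  | BY, Bbot => Bbot
  | BN, Bbot => BN
  | Bbot, Bbot => Bbot
  end.

Section Order.
Variable T : Type.
Variables (D : T -> Prop) (le : T -> T -> Prop).

Definition glb_in (P : T -> Prop) (x : T) : Prop :=
  D x /\ (forall y, P y -> le x y) /\
  (forall z, D z -> (forall y, P y -> le z y) -> le z x).

Definition cmi_in (x : T) : Prop :=
  D x /\ forall P : T -> Prop, (exists y, P y) -> (forall y, P y -> D y) ->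
    glb_in P x -> P x.

Definition maximal_in (x : T) : Prop :=
  D x /\ forall y, D y -> le x y -> y = x.
End Order.

Arguments glb_in {T} D le P x.
Arguments cmi_in {T} D le x.
Arguments maximal_in {T} D le x.

Definition allT {T : Type} (_ : T) : Prop := True.

Record ChuSpace : Type := {
  St : Type;
  Ef : Type;
  sle : St -> St -> Prop;
  eval : Ef -> St -> Bval;         (* epsilon_l(sigma) = eval l sigma *)
  sle_refl : forall s, sle s s;
  sle_trans : forall s1 s2 s3, sle s1 s2 -> sle s2 s3 -> sle s1 s3;
  sle_antisym : forall s1 s2, sle s1 s2 -> sle s2 s1 -> s1 = s2;
  sinf_exists : forall P : St -> Prop, (exists s, P s) ->
    exists s, glb_in allT sle P s;
  eval_inf : forall (P : St -> Prop) (s : St) (l : Ef), (exists s', P s') ->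
    glb_in allT sle P s ->
    glb_in allT Ble (fun b => exists s', P s' /\ b = eval l s') (eval l s);
  eval_sep_states : forall s s', (forall l, eval l s = eval l s') -> s = s';
  eval_sep_effects : forall l l', (forall s, eval l s = eval l' s) -> l = l';
  ebar : Ef -> Ef;
  ebar_invol : forall l, ebar (ebar l) = l;
  eval_bar : forall l s, eval (ebar l) s = Bneg (eval l s);
  effY : Ef;
  eval_effY : forall s, eval effY s = BY
}.

Arguments sle {c} _ _.
Arguments eval {c} _ _.

Definition pure (A : ChuSpace) (s : St A) : Prop := cmi_in allT (@sle A) s.

Definition pure_description (A : ChuSpace) : Prop :=
  (forall s, pure A s <-> maximal_in allT (@sle A) s) /\
  (forall s, glb_in allT (@sle A) (fun s' => pure A s' /\ sle s s') s).

Definition tens {A B : ChuSpace} (sa : St A) (sb : St B) : Ef A -> Ef B -> Bval :=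
  fun la lb => Bprod (eval la sa) (eval lb sb).

Definition tle {A B : ChuSpace} (f g : Ef A -> Ef B -> Bval) : Prop :=
  forall la lb, Ble (f la lb) (g la lb).

(** The minimal tensor product: maps of the form
    inf_{i in I} sigma_{i,A} (tensor) sigma_{i,B}, I nonempty, the infimum
    being the pointwise meet in B. *)
Definition minTens (A B : ChuSpace) (f : Ef A -> Ef B -> Bval) : Prop :=
  exists (I : Type) (fa : I -> St A) (fb : I -> St B),
    inhabited I /\
    forall la lb,
      glb_in allT Ble (fun b => exists i, b = tens (fa i) (fb i) la lb) (f la lb).

Definition minTens_pure (A B : ChuSpace) (f : Ef A -> Ef B -> Bval) : Prop :=
  cmi_in (minTens A B) (@tle A B) f.

(* Main.v *)
Require Import Defs.
From Stdlib Require Import Classical FunctionalExtensionality.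

Ltac bs := unfold Ble in *; repeat match goal with H : _ \/ _ |- _ => destruct H end;
  subst; try congruence; try (left; congruence); try (right; congruence).

Lemma Ble_refl x : Ble x x. Proof. right; reflexivity. Qed.
Lemma Ble_trans x y z : Ble x y -> Ble y z -> Ble x z.
Proof. destruct x, y, z; intros; bs. Qed.
Lemma Ble_antisym x y : Ble x y -> Ble y x -> x = y.
Proof. destruct x, y; intros; bs. Qed.
Lemma Ble_Y x : Ble BY x -> x = BY. Proof. destruct x; intros; bs. Qed.
Lemma Ble_N x : Ble BN x -> x = BN. Proof. destruct x; intros; bs. Qed.

Lemma glbB_unique S x y : glb_in allT Ble S x -> glb_in allT Ble S y -> x = y.
Proof.
  intros [_ [Hx Gx]] [_ [Hy Gy]]. apply Ble_antisym.
  - apply Gy; [exact I|exact Hx].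
  - apply Gx; [exact I|exact Hy].
Qed.

Lemma glbB_intro (S : Bval -> Prop) x : (exists s, S s) -> (forall s, S s -> Ble x s) ->
  (x = Bbot -> S Bbot \/ (S BY /\ S BN)) -> glb_in allT Ble S x.
Proof.
  intros [s0 Hs0] Hlb Hw. split; [exact I|]. split; [exact Hlb|].
  intros z _ Hz. destruct x.
  - pose proof (Hlb s0 Hs0) as H. destruct H as [H|H]; [discriminate|]. subst s0. apply Hz; exact Hs0.
  - pose proof (Hlb s0 Hs0) as H. destruct H as [H|H]; [discriminate|]. subst s0. apply Hz; exact Hs0.
  - destruct (Hw eq_refl) as [H|[H1 H2]].
    + apply Hz; exact H.
    + pose proof (Hz _ H1); pose proof (Hz _ H2). destruct z; bs.
Qed.

Lemma glbB_elim S : glb_in allT Ble S Bbot -> S Bbot \/ (S BY /\ S BN).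
Proof.
  intros [_ [_ G]].
  destruct (classic (S Bbot)) as [H|H]; [left; exact H|right].
  destruct (classic (S BY)) as [HY|HY].
  - destruct (classic (S BN)) as [HN|HN]; [auto|].
    exfalso. assert (Ble BY Bbot) by (apply G; [exact I|]; intros y Hy; destruct y; try contradiction; bs). bs.
  - exfalso. assert (Ble BN Bbot) by (apply G; [exact I|]; intros y Hy; destruct y; try contradiction; bs). bs.
Qed.

Lemma glbB_const (S : Bval -> Prop) v : (exists s, S s) -> (forall s, S s -> s = v) ->
  glb_in allT Ble S v.
Proof.
  intros [s0 H0] H. apply glbB_intro.
  - exists s0; exact H0.
  - intros s Hs. rewrite (H s Hs). apply Ble_refl.
  - intros ->. left. rewrite <- (H s0 H0). exact H0.
Qed.

Lemma Bprod_Y_r x : Bprod x BY = x. Proof. destruct x; reflexivity. Qed.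
Lemma Bprod_Y_l x : Bprod BY x = x. Proof. destruct x; reflexivity. Qed.
Lemma Bprod_mono x y u v : Ble x u -> Ble y v -> Ble (Bprod x y) (Bprod u v).
Proof. destruct x, y, u, v; simpl; intros; bs. Qed.

Lemma Bprod_bot_split (X Y : Bval -> Prop) x y :
  (exists u, X u) -> (exists v, Y v) ->
  glb_in allT Ble X x -> glb_in allT Ble Y y -> Bprod x y = Bbot ->
  (exists u v, X u /\ Y v /\ Bprod u v = Bbot) \/
  ((exists u v, X u /\ Y v /\ Bprod u v = BY) /\ (exists u v, X u /\ Y v /\ Bprod u v = BN)).
Proof.
  intros [u0 Hu0] [v0 Hv0] Gx Gy Hp.
  destruct x, y; simpl in Hp; try discriminate.
  - assert (u0 = BY) by (apply Ble_Y; apply (proj1 (proj2 Gx)); exact Hu0). subst u0.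
    destruct (glbB_elim _ Gy) as [H|[H1 H2]].
    + left. exists BY, Bbot. auto.
    + right. split; [exists BY, BY | exists BY, BN]; auto.
  - assert (v0 = BY) by (apply Ble_Y; apply (proj1 (proj2 Gy)); exact Hv0). subst v0.
    destruct (glbB_elim _ Gx) as [H|[H1 H2]].
    + left. exists Bbot, BY. auto.
    + right. split; [exists BY, BY | exists BN, BY]; auto.
  - destruct (glbB_elim _ Gx) as [H|[H1 H2]]; destruct (glbB_elim _ Gy) as [K|[K1 K2]].
    + left. exists Bbot, Bbot. auto.
    + left. exists Bbot, BY. auto.
    + left. exists BY, Bbot. auto.
    + right. split; [exists BY, BY | exists BN, BN]; auto.
Qed.

Lemma eval_mono (C : ChuSpace) (s s' : St C) l : sle s s' -> Ble (eval l s) (eval l s').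
Proof.
  intros H.
  assert (Hg : glb_in allT sle (fun x => x = s \/ x = s') s).
  { split; [exact I|]. split.
    - intros y [-> | ->]; [apply sle_refl | exact H].
    - intros z _ Hz. apply Hz. left; reflexivity. }
  pose proof (eval_inf C _ s l (ex_intro _ s (or_introl eq_refl)) Hg) as [_ [Hlb _]].
  apply Hlb. exists s'. split; [right; reflexivity | reflexivity].
Qed.

Lemma sle_of_eval (C : ChuSpace) (s s' : St C) :
  (forall l, Ble (eval l s) (eval l s')) -> sle s s'.
Proof.
  intros H.
  destruct (sinf_exists C (fun x => x = s \/ x = s') (ex_intro _ s (or_introl eq_refl))) as [m Hm].
  assert (Hms : m = s).
  { apply (eval_sep_states C). intros l.
    pose proof (eval_inf C _ m l (ex_intro _ s (or_introl eq_refl)) Hm) as Hg.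
    apply (glbB_unique _ _ _ Hg).
    split; [exact I|]. split.
    - intros b (x & [-> | ->] & ->); [apply Ble_refl | apply H].
    - intros z _ Hz. apply Hz. exists s. split; [left|]; reflexivity. }
  subst m. destruct Hm as [_ [Hlb _]]. apply Hlb. right; reflexivity.
Qed.

Lemma pure_above (C : ChuSpace) (HC : pure_description C) (s : St C) :
  exists p, pure C p /\ sle s p.
Proof.
  apply NNPP. intros Hn.
  destruct HC as [H1 H2].
  assert (Htop : forall z, sle z s).
  { intros z. destruct (H2 s) as [_ [_ G]]. apply G; [exact I|].
    intros y Hy. exfalso. apply Hn. exists y. exact Hy. }
  apply Hn. exists s. split; [|apply sle_refl].
  apply H1. split; [exact I|]. intros y _ Hy. apply sle_antisym; [exact (Htop y)|exact Hy].
Qed.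

Lemma eval_pure_glb (C : ChuSpace) (HC : pure_description C) s l :
  glb_in allT Ble (fun b => exists s', (pure C s' /\ sle s s') /\ b = eval l s') (eval l s).
Proof.
  apply eval_inf.
  - destruct (pure_above C HC s) as [p Hp]; exists p; exact Hp.
  - apply (proj2 HC).
Qed.

Lemma tens_mono (A B : ChuSpace) (a a' : St A) (b b' : St B) :
  sle a a' -> sle b b' -> tle (tens a b) (tens a' b').
Proof. intros H1 H2 la lb. unfold tens. apply Bprod_mono; apply eval_mono; assumption. Qed.

Lemma tle_trans (A B : ChuSpace) (f g h : Ef A -> Ef B -> Bval) : tle f g -> tle g h -> tle f h.
Proof. intros H1 H2 la lb. eapply Ble_trans; [apply H1|apply H2]. Qed.

Lemma tle_tens_inv (A B : ChuSpace) (a a' : St A) (b b' : St B) :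
  tle (tens a b) (tens a' b') -> sle a a' /\ sle b b'.
Proof.
  intros H. split; apply sle_of_eval; intros l.
  - specialize (H l (effY B)). unfold tens in H. rewrite !eval_effY, !Bprod_Y_r in H. exact H.
  - specialize (H (effY A) l). unfold tens in H. rewrite !eval_effY, !Bprod_Y_l in H. exact H.
Qed.

Lemma minTens_tens (A B : ChuSpace) (a : St A) (b : St B) : minTens A B (tens a b).
Proof.
  exists unit, (fun _ => a), (fun _ => b). split; [constructor; exact tt|].
  intros la lb. apply glbB_const.
  - exists (tens a b la lb), tt; reflexivity.
  - intros s [_ ->]; reflexivity.
Qed.

Definition Pmax (A B : ChuSpace) (f : Ef A -> Ef B -> Bval) : Prop :=
  exists (sa : St A) (sb : St B), pure A sa /\ pure B sb /\ f = tens sa sb.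

Lemma max_char (A B : ChuSpace) (HA : pure_description A) (HB : pure_description B) f :
  maximal_in (minTens A B) (@tle A B) f <-> Pmax A B f.
Proof.
  split.
  - intros [Hf Hmax]. destruct Hf as (I & fa & fb & [i0] & Hg).
    destruct (pure_above A HA (fa i0)) as [a' [Ha' Hsa]].
    destruct (pure_above B HB (fb i0)) as [b' [Hb' Hsb]].
    exists a', b'. split; [exact Ha'|]. split; [exact Hb'|].
    symmetry. apply Hmax; [apply minTens_tens|].
    apply tle_trans with (tens (fa i0) (fb i0)).
    + intros la lb. destruct (Hg la lb) as [_ [Hl _]]. apply Hl. exists i0; reflexivity.
    + apply tens_mono; assumption.
  - intros (sa & sb & Hsa & Hsb & ->). split; [apply minTens_tens|].
    intros y Hy Hle. destruct Hy as (I & ga & gb & [i0] & Hg).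
    assert (Heq : forall i, ga i = sa /\ gb i = sb).
    { intros i.
      assert (Hl : tle (tens sa sb) (tens (ga i) (gb i))).
      { apply tle_trans with y; [exact Hle|].
        intros la lb. destruct (Hg la lb) as [_ [Hl _]]. apply Hl. exists i; reflexivity. }
      destruct (tle_tens_inv _ _ _ _ _ _ Hl) as [H1 H2].
      split; [apply (proj2 (proj1 (proj1 HA sa) Hsa)) | apply (proj2 (proj1 (proj1 HB sb) Hsb))];
        [exact Logic.I|assumption|exact Logic.I|assumption]. }
    extensionality la; extensionality lb.
    apply (glbB_unique _ _ _ (Hg la lb)). apply glbB_const.
    + exists (tens sa sb la lb), i0. destruct (Heq i0) as [-> ->]; reflexivity.
    + intros s [i ->]. destruct (Heq i) as [-> ->]; reflexivity.
Qed.

Lemma cover (A B : ChuSpace) (HA : pure_description A) (HB : pure_description B) sigma :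
  minTens A B sigma ->
  (exists p, Pmax A B p /\ tle sigma p) /\
  forall la lb, glb_in allT Ble
    (fun v => exists p, (Pmax A B p /\ tle sigma p) /\ v = p la lb) (sigma la lb).
Proof.
  intros (I & fa & fb & [i0] & Hg).
  assert (Hlow : forall i, tle sigma (tens (fa i) (fb i))).
  { intros i la lb. destruct (Hg la lb) as [_ [Hl _]]. apply Hl. exists i; reflexivity. }
  assert (Hin : forall i a' b', pure A a' -> pure B b' -> sle (fa i) a' -> sle (fb i) b' ->
            Pmax A B (tens a' b') /\ tle sigma (tens a' b')).
  { intros i a' b' Ha Hb H1 H2. split.
    - exists a', b'; auto.
    - apply tle_trans with (tens (fa i) (fb i)); [apply Hlow|apply tens_mono; assumption]. }
  assert (Hab : forall i, exists a' b', pure A a' /\ pure B b' /\ sle (fa i) a' /\ sle (fb i) b').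
  { intros i. destruct (pure_above A HA (fa i)) as [a' [Ha Hsa]].
    destruct (pure_above B HB (fb i)) as [b' [Hb Hsb]]. exists a', b'; auto. }
  assert (Hne : exists p, Pmax A B p /\ tle sigma p).
  { destruct (Hab i0) as (a' & b' & Ha & Hb & H1 & H2). exists (tens a' b'). apply (Hin i0); auto. }
  split; [exact Hne|]. intros la lb.
  apply glbB_intro.
  - destruct Hne as [p Hp]. exists (p la lb), p. auto.
  - intros s (p & [_ Hp] & ->). apply Hp.
  - intros Hbot. pose proof (Hg la lb) as G. rewrite Hbot in G.
    destruct (glbB_elim _ G) as [[i Hi] | [[i1 Hi1] [i2 Hi2]]].
    + unfold tens in Hi.
      assert (NA : exists u, (fun b => exists s', (pure A s' /\ sle (fa i) s') /\ b = eval la s') u).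
      { destruct (pure_above A HA (fa i)) as [p Hp]. exists (eval la p), p. auto. }
      assert (NB : exists u, (fun b => exists s', (pure B s' /\ sle (fb i) s') /\ b = eval lb s') u).
      { destruct (pure_above B HB (fb i)) as [p Hp]. exists (eval lb p), p. auto. }
      destruct (Bprod_bot_split _ _ _ _ NA NB (eval_pure_glb A HA (fa i) la)
                  (eval_pure_glb B HB (fb i) lb) (eq_sym Hi))
        as [(u & v & (a' & [Ha' Hsa] & ->) & (b' & [Hb' Hsb] & ->) & Huv)
           | [(u & v & (a' & [Ha' Hsa] & ->) & (b' & [Hb' Hsb] & ->) & Huv)
              (u2 & v2 & (a2 & [Ha2 Hsa2] & ->) & (b2 & [Hb2 Hsb2] & ->) & Huv2)]].
      * left. exists (tens a' b'). split; [apply (Hin i); auto|]. unfold tens; rewrite Huv; reflexivity.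
      * right. split.
        -- exists (tens a' b'). split; [apply (Hin i); auto|]. unfold tens; rewrite Huv; reflexivity.
        -- exists (tens a2 b2). split; [apply (Hin i); auto|]. unfold tens; rewrite Huv2; reflexivity.
    + right. split.
      * destruct (Hab i1) as (a' & b' & Ha & Hb & H1 & H2). exists (tens a' b').
        split; [apply (Hin i1); auto|].
        symmetry. apply Ble_Y. rewrite Hi1. apply tens_mono; assumption.
      * destruct (Hab i2) as (a' & b' & Ha & Hb & H1 & H2). exists (tens a' b').
        split; [apply (Hin i2); auto|].
        symmetry. apply Ble_N. rewrite Hi2. apply tens_mono; assumption.
Qed.

Lemma glb_from_cover (A B : ChuSpace) (HA : pure_description A) (HB : pure_description B)
  (Q : (Ef A -> Ef B -> Bval) -> Prop) (HQ : forall f, Q f <-> Pmax A B f) sigma :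
  minTens A B sigma ->
  glb_in (minTens A B) (@tle A B) (fun p => Q p /\ tle sigma p) sigma.
Proof.
  intros Hs. destruct (cover A B HA HB sigma Hs) as [_ Hpw].
  split; [exact Hs|]. split.
  - intros y [_ Hy]; exact Hy.
  - intros z _ Hz la lb. destruct (Hpw la lb) as [_ [_ G]]. apply G; [exact I|].
    intros v (p & [Hp Hsp] & ->). apply Hz. split; [apply HQ; exact Hp | exact Hsp].
Qed.

Theorem mainTheorem13 (A B : ChuSpace)
  (HA : pure_description A) (HB : pure_description B) :
  (forall sigma, minTens A B sigma ->
     glb_in (minTens A B) (@tle A B)
       (fun sigma' => minTens_pure A B sigma' /\ tle sigma sigma') sigma)
  /\ (forall f, minTens_pure A B f <->
        exists (sa : St A) (sb : St B), pure A sa /\ pure B sb /\ f = tens sa sb)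
  /\ (forall f, minTens_pure A B f <-> maximal_in (minTens A B) (@tle A B) f).
Proof.
  assert (Hmc : forall f, maximal_in (minTens A B) (@tle A B) f <-> Pmax A B f)
    by (intro f; apply max_char; auto).
  assert (Hcm : forall f, minTens_pure A B f <-> maximal_in (minTens A B) (@tle A B) f).
  { intros f; split.
    - intros [Hf Hcmi].
      refine (proj1 (Hcmi (fun p => maximal_in (minTens A B) (@tle A B) p /\ tle f p) _ _ _)).
      + destruct (cover A B HA HB f Hf) as [[p [Hp Hl]] _].
        exists p; split; [apply Hmc; exact Hp | exact Hl].
      + intros y [[Hy _] _]; exact Hy.
      + apply glb_from_cover; auto.
    - intros Hm. split; [exact (proj1 Hm)|]. intros P [y Hy] HPD Hglb.
      assert (E : y = f) by (apply (proj2 Hm); [apply HPD; exact Hy | exact (proj1 (proj2 Hglb) y Hy)]).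
      rewrite <- E; exact Hy. }
  split; [|split].
  - intros sigma Hs. apply glb_from_cover; auto.
    intro f. rewrite Hcm. apply Hmc.
  - intro f. rewrite Hcm. exact (Hmc f).
  - exact Hcm.
Qed.
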